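(* Let $M$ be an $\mathfrak{S}$-module, $\mathfrak{S}=\mathbb{Z}[t]/(t^p-1)$, with $\ker(1-t)=0$. Then $N(t)=0$ on $M$ and $\operatorname{coker}(1-t)$ is a $\mathbb{Z}/p$-vector space. Let $(e_i)_{i\in I}$ be elements of $M$ that represent a $\mathbb{Z}/p$-basis of $\operatorname{coker}(1-t)$. Then the map $\psi\colon\bigoplus_{i\in I}\mathbb{Z}[t]/(N(t))\to M$, $(f_i)_{i\in I}\mapsto\sum_{i\in I}f_i(t)e_i$, is injective, and its cokernel is uniquely $p$-divisible.
   Context: $p$ is a prime and $N(t)=1+t+\dots+t^{p-1}$. Uniquely $p$-divisible means multiplication by $p$ is bijective. *)

(* Defs.v *)
From mathcomp Require Import all_boot all_order all_algebra.
Set Implicit Arguments. Unset Strict Implicit. Unset Printing Implicit Defensive.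
Import GRing.Theory.
Local Open Scope ring_scope.

(* An S-module, S = Z[t]/(t^p - 1), is an abelian group M with an additive
   endomorphism t such that t^p = id.  Action of f in Z[t] on M: *)
Definition polyact (M : zmodType) (t : M -> M) (f : {poly int}) (x : M) : M :=
  \sum_(k < size f) iter k t x *~ f`_k.

Definition Npoly (p : nat) : {poly int} := \sum_(k < p) 'X^k.

Definition pdivides (g f : {poly int}) : Prop := exists h : {poly int}, f = h * g.

Definition in_im1t (M : zmodType) (t : M -> M) (x : M) : Prop :=
  exists y : M, x = y - t y.

(* image of psi : (f_i)_i |-> sum_i f_i(t) e_i  (finitely supported families) *)
Definition in_impsi (M : zmodType) (t : M -> M) (I : eqType) (e : I -> M) (x : M) : Prop :=
  exists (s : seq I) (f : I -> {poly int}),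
    uniq s /\ x = \sum_(i <- s) polyact t (f i) (e i).

(* the classes of (e_i) form a Z/p-basis of coker(1-t) *)
Definition represents_basis (p : nat) (M : zmodType) (t : M -> M) (I : eqType) (e : I -> M) : Prop :=
  (forall x : M, exists (s : seq I) (c : I -> int),
      uniq s /\ in_im1t t (x - \sum_(i <- s) e i *~ c i)) /\
  (forall (s : seq I) (c : I -> int), uniq s ->
      in_im1t t (\sum_(i <- s) e i *~ c i) ->
      forall i, i \in s -> (p%:Z %| c i)%Z).

(* Main.v *)
From HB Require Import structures.
Require Import Defs.
From mathcomp Require Import all_boot all_order all_algebra.
From mathcomp Require Import ring.
From Stdlib Require Import ClassicalEpsilon.
Import GRing.Theory Num.Theory.
Local Open Scope ring_scope.
Set Implicit Arguments. Unset Strict Implicit.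

Section PA.
Variables (M : zmodType) (t : M -> M) (t_add : forall x y, t (x+y) = t x + t y).

Lemma t_zmod : zmod_morphism t.
Proof. move=> x y. have t0 : t 0 = 0. by apply/(addrI (t 0)); rewrite -t_add !addr0.
have tN z : t (- z) = - t z. by apply/(addrI (t z)); rewrite -t_add !subrr.
by rewrite t_add tN. Qed.
#[local] HB.instance Definition _ := GRing.isZmodMorphism.Build M M t t_zmod.

Lemma iter_zmod k : zmod_morphism (iter k t).
Proof. elim: k => [|k IH] x y //=. by rewrite IH raddfB. Qed.
#[local] HB.instance Definition _ k := GRing.isZmodMorphism.Build M M (iter k t) (iter_zmod k).

Lemma iterC k x : iter k t (t x) = t (iter k t x).
Proof. by rewrite -iterSr. Qed.

Lemma polyact_widen (f : {poly int}) n x : (size f <= n)%N ->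
  polyact t f x = \sum_(k < n) iter k t x *~ f`_k.
Proof.
move=> hn; rewrite /polyact (big_ord_widen n (fun k => iter k t x *~ f`_k) hn).
rewrite big_mkcond /=; apply: eq_bigr => i _.
case: ifP => // /negbT; rewrite -leqNgt => hi.
by rewrite nth_default // mulr0z.
Qed.

Lemma polyactD f g x : polyact t (f + g) x = polyact t f x + polyact t g x.
Proof.
set n := maxn (size f) (size g).
rewrite (@polyact_widen (f+g) n) ?(leq_trans (size_polyD _ _)) //.
rewrite (@polyact_widen f n) ?leq_maxl // (@polyact_widen g n) ?leq_maxr //.
rewrite -big_split /=; apply: eq_bigr => i _; by rewrite coefD mulrzDr.
Qed.

Lemma polyact0 x : polyact t 0 x = 0.
Proof. by rewrite /polyact size_poly0 big_ord0. Qed.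

Lemma polyactN f x : polyact t (- f) x = - polyact t f x.
Proof. by apply/eqP; rewrite -subr_eq0 opprK -polyactD addNr polyact0. Qed.

Lemma polyactB f g x : polyact t (f - g) x = polyact t f x - polyact t g x.
Proof. by rewrite polyactD polyactN. Qed.

Lemma polyactMn f n x : polyact t (f *+ n) x = polyact t f x *+ n.
Proof. elim: n => [|n IH]; first by rewrite !mulr0n polyact0.
by rewrite !mulrS polyactD IH. Qed.

Lemma polyactC c x : polyact t c%:P x = x *~ c.
Proof.
rewrite (@polyact_widen _ 1) ?size_polyC ?leq_b1 //.
by rewrite big_ord1 coefC.
Qed.

Lemma polyact1 x : polyact t 1 x = x.
Proof. by rewrite -polyC1 polyactC. Qed.

Lemma polyact_mulX f x : polyact t (f * 'X) x = polyact t f (t x).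
Proof.
rewrite (@polyact_widen _ (size f).+1); last first.
  by rewrite (leq_trans (size_mul_leq _ _)) // size_polyX addn2.
rewrite big_ord_recl /= coefMX eqxx mulr0z add0r /polyact.
apply: eq_bigr => i _; by rewrite coefMX /bump /= add0n -iterC.
Qed.

Lemma polyact_zmod f : zmod_morphism (polyact t f).
Proof.
move=> x y; rewrite /polyact -sumrB; apply: eq_bigr => i _.
by rewrite (iter_zmod i) mulrzBl.
Qed.
#[local] HB.instance Definition _ f := GRing.isZmodMorphism.Build M M (polyact t f) (polyact_zmod f).

Lemma polyact_t f x : polyact t f (t x) = t (polyact t f x).
Proof.
rewrite /polyact raddf_sum; apply: eq_bigr => i _.
by rewrite raddfMz iterC.
Qed.

Lemma polyactZ c g x : polyact t (c%:P * g) x = polyact t g x *~ c.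
Proof.
rewrite (@polyact_widen _ (size g)); last by rewrite mul_polyC size_scale_leq.
rewrite /polyact mulrz_suml; apply: eq_bigr => i _.
by rewrite coefCM mulrC mulrzA.
Qed.

Lemma polyactM f g x : polyact t (f * g) x = polyact t f (polyact t g x).
Proof.
elim/poly_ind: f x => [|q c IH] x; first by rewrite mul0r !polyact0.
rewrite mulrDl mulrAC !polyactD polyact_mulX polyact_mulX IH polyact_t.
by rewrite polyactZ polyactC.
Qed.

Lemma polyactX x : polyact t 'X x = t x.
Proof. by rewrite -[X in polyact t X]mul1r polyact_mulX polyact1. Qed.

Lemma polyactXn k x : polyact t 'X^k x = iter k t x.
Proof.
elim: k x => [|k IH] x; first by rewrite expr0 polyact1.
by rewrite exprSr polyact_mulX IH iterSr.
Qed.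

End PA.

Unset Implicit Arguments. Set Strict Implicit.

Definition Gs (n : nat) : {poly int} := \sum_(k < n) 'X^k.

Lemma Gs_tele n : (1 - 'X) * Gs n = 1 - 'X^n.
Proof.
elim: n => [|n IH]; first by rewrite /Gs big_ord0 mulr0 expr0 subrr.
rewrite /Gs big_ord_recr /= mulrDr -/(Gs n) IH exprSr. ring.
Qed.

Lemma pN_decomp p : exists Q : {poly int}, p%:R = Npoly p + (1 - 'X) * Q.
Proof.
exists (\sum_(k < p) Gs k).
rewrite mulr_sumr (eq_bigr (fun k : 'I_p => 1 - 'X^k)); last by move=> i _; rewrite Gs_tele.
rewrite sumrB sumr_const card_ord /Npoly. rewrite -[_ *+ p]mulr_natl mulr1. ring.
Qed.

Lemma frob (R : comPzRingType) p (a b : R) : prime p ->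
  exists S, (a + b) ^+ p = a ^+ p + b ^+ p + p%:R * S.
Proof.
case: p => [//|q] hp.
exists (\sum_(i < q) (a ^+ (q.+1 - i.+1) * b ^+ i.+1 *+ ('C(q.+1, i.+1) %/ q.+1))).
rewrite exprDn big_ord_recl /= subn0 bin0 mulr1n expr0 mulr1.
rewrite big_ord_recr /= /bump /= add1n subnn binn expr0 mul1r mulr1n.
rewrite mulr_sumr -[in RHS]addrA [in RHS](addrC (b ^+ _)); congr (_ + (_ + _)).
apply: eq_bigr => i _; rewrite add1n mulr_natl -mulrnA divnK //.
apply: prime_dvd_bin => //; rewrite ltn0Sn /=.
by have := ltn_ord i.
Qed.

Lemma one_subX_neq0 : (1 - 'X : {poly int}) != 0.
Proof.
apply/negP => /eqP h; have := congr1 (fun q : {poly int} => q.[0]) h.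
by rewrite !hornerE.
Qed.

Lemma binom_N p : prime p ->
  exists G : {poly int}, (1 - 'X) ^+ p.-1 = Npoly p + p%:R * G.
Proof.
move=> hp; have p0 : (0 < p)%N by apply: prime_gt0.
have [B hB] : exists B : {poly int}, (1 - 'X) * ((1 - 'X) ^+ p.-1 - Npoly p) = p%:R * B.
  have [S hS] := @frob _ p (1 : {poly int}) (- 'X) hp.
  have e1 : (1 - 'X) * ((1 - 'X : {poly int}) ^+ p.-1) = (1 - 'X) ^+ p.
    by rewrite -exprS (prednK p0).
  have e2 : (1 - 'X) * Npoly p = 1 - 'X^p by exact: Gs_tele.
  rewrite mulrBr e1 e2 hS expr1n exprNn.
  case: (even_prime hp) => [->|op].
    exists ('X^2 + S); rewrite expr2 mulN1r opprK; ring.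
  by exists S; rewrite -signr_odd op expr1 mulN1r; ring.
have hB1 : root B 1.
  have := congr1 (fun q : {poly int} => q.[1]) hB.
  rewrite /= -polyC_natr !hornerE => /esym/eqP.
  rewrite mulf_eq0 => /orP[|/eqP //].
  by rewrite pnatr_eq0; case: p hp {p0 hB}.
have [B' hB'] := factor_theorem _ _ hB1.
exists (- B'); apply: (mulfI one_subX_neq0).
apply/eqP; rewrite -subr_eq0; apply/eqP.
have e : (1-'X)*((1-'X)^+p.-1) - (1-'X)*(Npoly p + p%:R * -B') =
  (1-'X)*((1-'X)^+p.-1 - Npoly p) - (1-'X)*(p%:R * -B') :> {poly int} by ring.
rewrite e hB hB' polyC1; ring.
Qed.

Lemma fact1 p (f : {poly int}) : (p%:Z %| f.[1])%Z ->
  exists a g, f = a * Npoly p + (1 - 'X) * g.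
Proof.
move=> /dvdzP [c hc].
have [Q hQ] := pN_decomp p.
have hr : root (f - (f.[1])%:P) 1 by rewrite /root !hornerE subrr.
have [q hq] := factor_theorem _ _ hr.
have ef : f = q * ('X - 1%:P) + (f.[1])%:P by rewrite -hq subrK.
exists c%:P, (c%:P * Q - q).
have hp : (p%:Z)%:P = p%:R :> {poly int} by rewrite -polyC_natr natz.
rewrite ef hc polyCM hp hQ polyC1; ring.
Qed.

Lemma size_Gs n : (size (Gs n) <= n)%N.
Proof.
elim: n => [|n IH]; first by rewrite /Gs big_ord0 size_poly0.
rewrite /Gs big_ord_recr /= -/(Gs n).
rewrite (leq_trans (size_polyD _ _)) // geq_max size_polyXn leqnn andbT.
exact: leq_trans IH _.
Qed.

Lemma Npoly_monic p : (0 < p)%N -> Npoly p \is monic.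
Proof.
case: p => [//|q] _; rewrite /Npoly big_ord_recr /= -/(Gs q) monicE lead_coefDr.
  by rewrite lead_coefXn.
by rewrite size_polyXn ltnS size_Gs.
Qed.

Lemma pdiv_final p (f : {poly int}) : prime p ->
  (forall m, exists w, pdivides (Npoly p) (f - ((p%:Z) ^+ m)%:P * w)) ->
  pdivides (Npoly p) f.
Proof.
move=> hp H; have p0 : (0 < p)%N by apply: prime_gt0.
have mN := Npoly_monic p p0.
have N0 : Npoly p != 0 by apply/negP => /eqP h; move: mN; rewrite h monicE lead_coef0.
set r := f %% Npoly p.
have hf := Pdiv.IdomainMonic.divp_eq mN f.
have sr : (size r < size (Npoly p))%N by rewrite ltn_modp.
have key : forall m k, (p ^ m %| absz (r`_k)%R)%N.
  move=> m k; have [w [h hw]] := H m.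
  set P := ((p%:Z) ^+ m)%:P.
  have hw' := Pdiv.IdomainMonic.divp_eq mN w.
  set w' := w %% Npoly p in hw'.
  have sw : (size w' < size (Npoly p))%N by rewrite ltn_modp.
  have e : r - P * w' = (h + P * (w %/ Npoly p) - f %/ Npoly p) * Npoly p.
    have : f - P * w = h * Npoly p by [].
    rewrite {1}hf {1}hw' => e0.
    rewrite mulrBl mulrDl -e0; ring.
  have K0 : h + P * (w %/ Npoly p) - f %/ Npoly p = 0.
    apply/eqP/negP => /negP hK.
    have := size_Mmonic hK mN; rewrite -e => hs.
    have : (size (r - P * w')%R < size (Npoly p))%N.
      rewrite (leq_ltn_trans (size_polyD _ _)) // gtn_max sr /= size_polyN.
      by rewrite mul_polyC (leq_ltn_trans (size_scale_leq _ _)).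
    rewrite hs; have : (0 < size (h + P * (w %/ Npoly p) - f %/ Npoly p)%R)%N.
      by rewrite size_poly_gt0.
    by case: (size _) => // n _; rewrite addSn /= -{2}[size (Npoly p)]add0n ltn_add2r.
  move: e; rewrite K0 mul0r => /eqP; rewrite subr_eq0 => /eqP ->.
  by rewrite coefCM abszM abszX /= dvdn_mulr.
have r0 : r = 0.
  apply/polyP => k; rewrite coef0; apply/eqP; apply/negP => /negP hk.
  have := key `|(r`_k)%R|%N k.
  move=> /(dvdn_leq _); rewrite absz_gt0 => /(_ hk).
  by rewrite leqNgt ltn_expl // prime_gt1.
by exists (f %/ Npoly p); rewrite {1}hf -/r r0 addr0.
Qed.
Set Implicit Arguments. Unset Strict Implicit.

Section Main.
Variables (p : nat) (M : zmodType) (t : M -> M).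
Hypotheses (hp : prime p) (t_add : forall x y : M, t (x + y) = t x + t y)
  (t_p : forall x : M, iter p t x = x)
  (ker0 : forall x : M, x - t x = 0 -> x = 0).

#[local] HB.instance Definition _ := GRing.isZmodMorphism.Build M M t (t_zmod t_add).
Lemma paB f x y : polyact t f (x - y) = polyact t f x - polyact t f y.
Proof. exact: (@polyact_zmod M t t_add f x y). Qed.
Lemma pa0 f : polyact t f 0 = 0.
Proof. have h := paB f 0 0; rewrite subr0 in h; by rewrite {1}h subrr. Qed.
Lemma paNx f x : polyact t f (- x) = - polyact t f x.
Proof. by rewrite -sub0r paB pa0 sub0r. Qed.
Lemma paD f x y : polyact t f (x + y) = polyact t f x + polyact t f y.
Proof. by rewrite -{1}[y]opprK paB paNx opprK. Qed.
Lemma pa_sum (J : Type) f (s : seq J) (F : J -> M) :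
  polyact t f (\sum_(j <- s) F j) = \sum_(j <- s) polyact t f (F j).
Proof.
elim: s => [|a s IH]; first by rewrite !big_nil pa0.
by rewrite !big_cons paD IH.
Qed.
Lemma paMn f x n : polyact t f (x *+ n) = polyact t f x *+ n.
Proof. elim: n => [|n IH]; first by rewrite !mulr0n pa0. by rewrite !mulrS paD IH. Qed.

Lemma pa1X y : polyact t (1 - 'X) y = y - t y.
Proof. by rewrite polyactB polyact1 polyactX. Qed.

Lemma paN x : polyact t (Npoly p) x = 0.
Proof.
apply: ker0; rewrite -pa1X -(polyactM t_add) Gs_tele polyactB polyact1 polyactXn.
by rewrite t_p subrr.
Qed.

Lemma im_p x : in_im1t t (x *+ p).
Proof.
have [Q hQ] := pN_decomp p.
exists (polyact t Q x).
rewrite -pa1X -(polyactM t_add) -{1}(polyact1 t x) -polyactMn.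
by rewrite -[1 *+ p]/(p%:R) hQ polyactD paN add0r.
Qed.

Lemma im0 : in_im1t t 0.
Proof. by exists 0; rewrite raddf0 subrr. Qed.

Lemma imD x y : in_im1t t x -> in_im1t t y -> in_im1t t (x + y).
Proof. move=> [a ->] [b ->]; exists (a + b); by rewrite raddfD opprD addrACA. Qed.

Lemma imN x : in_im1t t x -> in_im1t t (- x).
Proof. move=> [a ->]; exists (- a); by rewrite raddfN opprK opprB addrC. Qed.

Lemma im_sum (I : Type) (s : seq I) (F : I -> M) :
  (forall i, in_im1t t (F i)) -> in_im1t t (\sum_(i <- s) F i).
Proof.
move=> h; elim: s => [|a s IH]; first by rewrite big_nil; exact: im0.
by rewrite big_cons; apply: imD.
Qed.

Lemma im_poly f x : in_im1t t (polyact t f x - x *~ f.[1]).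
Proof.
have hr : root (f - (f.[1])%:P) 1 by rewrite /root !hornerE subrr.
have [q hq] := factor_theorem _ _ hr.
exists (- polyact t q x).
rewrite -(polyactC t) -polyactB hq (polyactM t_add) polyC1 polyactB polyact1 polyactX.
by rewrite paB (polyact_t t_add) raddfN opprK addrC.
Qed.

Variables (I : eqType) (e : I -> M) (hb : represents_basis p t e).

Lemma key (s : seq I) (f : I -> {poly int}) : uniq s ->
  in_im1t t (\sum_(i <- s) polyact t (f i) (e i)) ->
  exists g : I -> {poly int},
    \sum_(i <- s) polyact t (f i) (e i) =
      \sum_(i <- s) polyact t (g i) (e i) - t (\sum_(i <- s) polyact t (g i) (e i)) /\
    forall i, i \in s -> pdivides (Npoly p) (f i - (1 - 'X) * g i).
Proof.
move=> us him.
have h1 : in_im1t t (\sum_(i <- s) e i *~ (f i).[1]).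
  have -> : \sum_(i <- s) e i *~ (f i).[1] = \sum_(i <- s) polyact t (f i) (e i)
     - \sum_(i <- s) (polyact t (f i) (e i) - e i *~ (f i).[1]).
    by rewrite sumrB opprB addrC subrK.
  by apply: imD => //; apply: imN; apply: im_sum => i; apply: im_poly.
have hd := hb.2 s (fun i => (f i).[1]) us h1.
have H : forall i, exists g : {poly int}, i \in s -> exists a, f i = a * Npoly p + (1 - 'X) * g.
  move=> i; case his: (i \in s); last by exists 0.
  have [a [g hg]] := fact1 p (f i) (hd i his).
  by exists g => _; exists a.
pose g i := proj1_sig (constructive_indefinite_description _ (H i)).
have hg i : i \in s -> exists a, f i = a * Npoly p + (1 - 'X) * g i.
  exact: (proj2_sig (constructive_indefinite_description _ (H i))).
exists g; split; last first.
  by move=> i /hg [a ->]; exists a; rewrite addrK.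
rewrite raddf_sum -sumrB; apply: eq_big_seq => i /hg [a ->].
by rewrite polyactD (polyactM t_add) paN pa0 add0r (polyactM t_add) pa1X.
Qed.

Definition rel (s : seq I) (f : I -> {poly int}) :=
  \sum_(i <- s) polyact t (f i) (e i) = 0.

Lemma D1 s f : uniq s -> rel s f -> exists g, rel s g /\
  forall i, i \in s -> pdivides (Npoly p) (f i - (1 - 'X) * g i).
Proof.
move=> us hr.
have him : in_im1t t (\sum_(i <- s) polyact t (f i) (e i)) by rewrite hr; exact: im0.
have [g [hs hg]] := @key s f us him.
by exists g; split => //; apply: ker0; rewrite -hs.
Qed.

Lemma D2 k s f : uniq s -> rel s f -> exists g, rel s g /\
  forall i, i \in s -> pdivides (Npoly p) (f i - (1 - 'X) ^+ k * g i).
Proof.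
move=> us; elim: k f => [|k IH] f hr.
  by exists f; split => // i _; exists 0; rewrite expr0 mul1r subrr mul0r.
have [g [hg hfg]] := IH f hr.
have [h [hh hgh]] := @D1 s g us hg.
exists h; split => // i his.
have [a ha] := hfg i his; have [b hb'] := hgh i his.
exists (a + (1 - 'X) ^+ k * b).
have -> : f i - (1 - 'X) ^+ k.+1 * h i =
   (f i - (1 - 'X) ^+ k * g i) + (1 - 'X) ^+ k * (g i - (1 - 'X) * h i).
  rewrite exprSr; ring.
by rewrite ha hb'; ring.
Qed.

Lemma D3 m s f : uniq s -> rel s f -> forall i, i \in s ->
  exists w, pdivides (Npoly p) (f i - ((p%:Z) ^+ m)%:P * w).
Proof.
move=> us; elim: m f => [|m IH] f hr i his.
  by exists (f i); exists 0; rewrite expr0 polyC1 mul1r subrr mul0r.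
have [g [hg hfg]] := @D2 p.-1 s f us hr.
have [G hG] := binom_N p hp.
have [w [b hb']] := IH g hg i his.
have [a ha] := hfg i his.
exists (G * w); exists (a + g i + p%:R * G * b).
have hpP : ((p%:Z) ^+ m.+1)%:P = p%:R * ((p%:Z) ^+ m)%:P :> {poly int}.
  by rewrite exprS polyCM -polyC_natr natz.
rewrite hpP.
have -> : f i = (f i - (1 - 'X) ^+ p.-1 * g i) + (1 - 'X) ^+ p.-1 * g i by rewrite subrK.
rewrite ha hG.
have -> : g i = (g i - ((p%:Z) ^+ m)%:P * w) + ((p%:Z) ^+ m)%:P * w by rewrite subrK.
rewrite hb'; ring.
Qed.

Lemma inj s f : uniq s -> rel s f -> forall i, i \in s -> pdivides (Npoly p) (f i).
Proof.
move=> us hr i his; apply: (pdiv_final p (f i) hp) => m.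
exact: @D3 m s f us hr i his.
Qed.

Definition imps (x : M) := exists s : seq (I * {poly int}),
  x = \sum_(q <- s) polyact t q.2 (e q.1).

Lemma imps0 : imps 0.
Proof. by exists [::]; rewrite big_nil. Qed.

Lemma impsD x y : imps x -> imps y -> imps (x + y).
Proof. by move=> [s ->] [s' ->]; exists (s ++ s'); rewrite big_cat. Qed.

Lemma imps_pa g x : imps x -> imps (polyact t g x).
Proof.
move=> [s ->]; exists [seq (q.1, g * q.2) | q <- s].
rewrite pa_sum big_map; apply: eq_bigr => q _ /=.
by rewrite (polyactM t_add).
Qed.

Lemma impsN x : imps x -> imps (- x).
Proof.
move=> /(imps_pa (-1)); by rewrite polyactN polyact1.
Qed.

Lemma imps_of (s : seq I) (f : I -> {poly int}) :
  imps (\sum_(i <- s) polyact t (f i) (e i)).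
Proof. by exists [seq (i, f i) | i <- s]; rewrite big_map. Qed.

Lemma imps_norm x : imps x -> in_impsi t e x.
Proof.
move=> [s ->]; elim: s => [|[i g] s [s' [f' [us' IH]]]].
  by exists [::], (fun _ => 0); rewrite !big_nil.
rewrite big_cons /= IH.
case his: (i \in s').
  exists s', (fun j => if j == i then f' i + g else f' j); split => //.
  rewrite (bigD1_seq i) //= [in RHS](bigD1_seq i) //= eqxx polyactD.
  rewrite addrA [_ g _ + _]addrC; congr (_ + _).
  by apply: eq_bigr => j /negbTE ->.
exists (i :: s'), (fun j => if j == i then g else f' j); split.
  by rewrite /= his us'.
rewrite big_cons eqxx; congr (_ + _); apply: eq_big_seq => j hj.
by case: eqP hj => // ->; rewrite his.
Qed.

Lemma imps_of_impsi x : in_impsi t e x -> imps x.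
Proof. by move=> [s [f [_ ->]]]; exact: imps_of. Qed.

Lemma Dv k x : exists z, imps (x - polyact t ((1 - 'X) ^+ k) z).
Proof.
elim: k x => [|k IH] x.
  by exists x; rewrite expr0 polyact1 subrr; exact: imps0.
have [z hz] := IH x.
have [s [c [us [y hy]]]] := hb.1 z.
exists y.
set S := \sum_(i <- s) e i *~ c i.
have ez : z = S + (y - t y) by rewrite -hy addrC subrK.
have hS : imps S.
  exists [seq (i, (c i)%:P) | i <- s]; rewrite big_map.
  by apply: eq_bigr => i _; rewrite polyactC.
rewrite exprSr (polyactM t_add).
set u := polyact t ((1 - 'X) ^+ k) (polyact t (1 - 'X) y).
have -> : x - u = (x - polyact t ((1 - 'X) ^+ k) z) + polyact t ((1 - 'X) ^+ k) S.
  rewrite ez paD -pa1X -/u opprD addrA addrAC subrK //.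
by apply: impsD => //; apply: imps_pa.
Qed.

Lemma pow_eq : exists G : {poly int},
  forall z, polyact t ((1 - 'X) ^+ p.-1) z = polyact t G z *+ p.
Proof.
have [G hG] := binom_N p hp.
by exists G => z; rewrite hG polyactD paN add0r mulr_natl polyactMn.
Qed.

Lemma T1 w : imps (w - t w) -> imps w.
Proof.
move=> /imps_norm [s [f [us hs]]].
have him : in_im1t t (\sum_(i <- s) polyact t (f i) (e i)) by rewrite -hs; exists w.
have [g [hsg _]] := @key s f us him.
have -> : w = \sum_(i <- s) polyact t (g i) (e i); last exact: imps_of.
apply/eqP; rewrite -subr_eq0; apply/eqP; apply: ker0.
set W := \sum_(i <- s) polyact t (g i) (e i) in hsg *.
have rearr (a b c d : M) : a - b - (c - d) = (a - c) - (b - d).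
  by rewrite !opprB addrACA [in RHS]addrACA [- c + _]addrC.
by rewrite raddfB rearr -hsg -hs subrr.
Qed.

Lemma Tk k w : imps (polyact t ((1 - 'X) ^+ k) w) -> imps w.
Proof.
elim: k w => [|k IH] w; first by rewrite expr0 polyact1.
rewrite exprSr (polyactM t_add) pa1X => /IH; exact: T1.
Qed.

End Main.

Unset Implicit Arguments. Set Strict Implicit.

Theorem lemma6p7 (p : nat) (M : zmodType) (t : M -> M)
  (hp : prime p)
  (t_add : forall x y : M, t (x + y) = t x + t y)
  (t_p : forall x : M, iter p t x = x)
  (ker0 : forall x : M, x - t x = 0 -> x = 0) :
  (forall x : M, polyact t (Npoly p) x = 0) /\
  (forall x : M, in_im1t t (x *+ p)) /\
  (forall (I : eqType) (e : I -> M), represents_basis p t e ->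
     (* psi injective *)
     (forall (s : seq I) (f : I -> {poly int}), uniq s ->
        \sum_(i <- s) polyact t (f i) (e i) = 0 ->
        forall i, i \in s -> pdivides (Npoly p) (f i)) /\
     (* coker psi uniquely p-divisible *)
     (forall x : M, exists y : M, in_impsi t e (x - y *+ p)) /\
     (forall y : M, in_impsi t e (y *+ p) -> in_impsi t e y)).
Proof.
split; first exact: (paN t_add t_p ker0).
split; first exact: (im_p t_add t_p ker0).
move=> I e hb; have [G hG] := pow_eq hp t_add t_p ker0.
split; first by move=> s f us hr; exact: (inj hp t_add t_p ker0 hb us hr).
split.
  move=> x; have [z hz] := Dv t_add hb p.-1 x.
  exists (polyact t G z); apply: imps_norm.
  by rewrite -hG.
move=> y /imps_of_impsi hy.
apply: imps_norm; apply: (Tk t_add t_p ker0 hb (k := p.-1)).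
rewrite hG -paMn; last exact: t_add.
exact: imps_pa.
Qed.
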